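(* Let $G$ be a group with multiplication $\mu$ and neutral element $e$, acting partially on a set $X$ via subsets $X_g\subseteq X$ and bijections $\alpha_g:X_{g^{-1}}\to X_g$ ($g\in G$). Put $G\bullet X=\{(g,x)\in G\times X\mid x\in X_{g^{-1}}\}$, let $\iota:G\bullet X\to G\times X$ be the inclusion and $\alpha:G\bullet X\to X$, $\alpha(g,x)=\alpha_g(x)$. On $G\times X$ define $(g,x)\sim(h,y)$ iff $(h^{-1}g,x)\in G\bullet X$ and $\alpha(h^{-1}g,x)=y$. Then the quotient set $Y=(G\times X)/\!\sim$, with the canonical projection $G\times X\to Y$, $(g,x)\mapsto[g,x]$, is the coequalizer in $\mathsf{Set}$ of the pair of maps $$G\times\alpha,\ \ (\mu\times X)\circ(G\times\iota)\ :\ G\times(G\bullet X)\longrightarrow G\times X.$$ Consequently, the globalization of this partial action is given exactly by this coequalizer.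
   Context: A partial action of a group $G$ on a set $X$ consists of subsets $X_g\subseteq X$ and bijections $\alpha_g:X_{g^{-1}}\to X_g$ for $g\in G$ such that $X_e=X$, $\alpha_e=\mathrm{id}_X$, and for all $g,h\in G$ and $x\in X_{h^{-1}}$ with $\alpha_h(x)\in X_{g^{-1}}$ one has $x\in X_{(gh)^{-1}}$ and $\alpha_{gh}(x)=\alpha_g(\alpha_h(x))$. It is known that $\sim$ is an equivalence relation and that $Y=(G\times X)/\!\sim$ with the global action $h\cdot[g,x]=[hg,x]$ is the globalization (enveloping action) of the partial action, i.e. the smallest $G$-set containing $X$ such that the partial action is the restriction of the global one. *)

(* Defs.v *)
(* G is an arbitrary (possibly infinite) group, [groupType]
   from mathcomp's monoid.v; X is an arbitrary type (a set). *)
From HB Require Import structures.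
From mathcomp Require Import all_boot.
From mathcomp Require Export monoid.

Set Implicit Arguments.
Unset Strict Implicit.
Unset Printing Implicit Defensive.

Local Open Scope group_scope.

(* A partial action of G on X: subsets X_g (given by [pdom g]) and maps
   alpha_g (given by [pact g], only meaningful on X_{g^-1}). *)
Record partial_action (G : groupType) (X : Type) := PartialAction {
  pdom : G -> X -> Prop;
  pact : G -> X -> X;
  pdom1 : forall x, pdom 1 x;
  pact1 : forall x, pact 1 x = x;
  pact_dom : forall g x, pdom g^-1 x -> pdom g (pact g x);
  pact_inj : forall g x y, pdom g^-1 x -> pdom g^-1 y ->
               pact g x = pact g y -> x = y;
  pact_surj : forall g y, pdom g y -> exists2 x, pdom g^-1 x & pact g x = y;
  pact_comp : forall g h x, pdom h^-1 x -> pdom g^-1 (pact h x) ->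
               pdom (g * h)^-1 x /\ pact (g * h) x = pact g (pact h x)
}.

Section GbulletX.
Variables (G : groupType) (X : Type) (A : partial_action G X).

Definition GbX := {p : G * X | pdom A (p.1)^-1 p.2}.

Definition iota_GbX (p : GbX) : G * X := sval p.

Definition alpha_GbX (p : GbX) : X := pact A (sval p).1 (sval p).2.

Definition coeq_map1 (q : G * GbX) : G * X := (q.1, alpha_GbX q.2).

Definition coeq_map2 (q : G * GbX) : G * X :=
  (q.1 * (iota_GbX q.2).1, (iota_GbX q.2).2).

Definition glob_rel (a b : G * X) : Prop :=
  pdom A (b.1^-1 * a.1)^-1 a.2 /\ pact A (b.1^-1 * a.1) a.2 = b.2.

Definition glob_quot : Type := {P : G * X -> Prop | exists a, P = glob_rel a}.

Definition glob_proj (a : G * X) : glob_quot :=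
  exist (fun P => exists a, P = glob_rel a) (glob_rel a) (ex_intro _ a erefl).

End GbulletX.

Definition is_coequalizer (A B Y : Type) (f1 f2 : A -> B) (q : B -> Y) : Prop :=
  (forall a, q (f1 a) = q (f2 a)) /\
  forall (Z : Type) (h : B -> Z), (forall a, h (f1 a) = h (f2 a)) ->
    exists u : Y -> Z, (forall b, u (q b) = h b) /\
      forall u' : Y -> Z, (forall b, u' (q b) = h b) -> forall y, u' y = u y.

(* Main.v *)
Require Import Defs.
From mathcomp Require Import all_boot.
From mathcomp Require Import monoid.
From Stdlib Require Import ClassicalEpsilon FunctionalExtensionality PropExtensionality.

Set Implicit Arguments.
Local Open Scope group_scope.

Section Aux.
Variables (G : groupType) (X : Type) (A : partial_action G X).

Lemma gr_refl a : glob_rel A a a.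
Proof. rewrite /glob_rel mulVg invg1; split; [exact: pdom1 | exact: pact1]. Qed.

Lemma gr_sym a b : glob_rel A a b -> glob_rel A b a.
Proof.
case: a b => [a1 a2] [b1 b2]; rewrite /glob_rel /= => -[D E].
have ->: a1^-1 * b1 = (b1^-1 * a1)^-1 by rewrite invgM invgK.
set k := b1^-1 * a1 in D E *.
rewrite invgK; split; first by rewrite -E; exact: pact_dom.
have D2 : pdom A (k^-1)^-1 (pact A k a2) by rewrite invgK; exact: pact_dom.
have [_ H] := pact_comp D D2. rewrite -E -H.
by rewrite mulVg pact1.
Qed.

Lemma gr_trans a b c : glob_rel A a b -> glob_rel A b c -> glob_rel A a c.
Proof.
case: a b c => [a1 a2] [b1 b2] [c1 c2]; rewrite /glob_rel /= => -[D E] [D2 E2].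
have ->: c1^-1 * a1 = (c1^-1 * b1) * (b1^-1 * a1) by rewrite mulgA mulgK.
rewrite -E in D2 E2.
have [D3 ->] := pact_comp D D2.
by rewrite E2.
Qed.

Lemma gr_eq a b : glob_rel A a b -> glob_rel A a = glob_rel A b.
Proof.
move=> H; apply: functional_extensionality => c;
apply: propositional_extensionality; split => Hc.
- exact: gr_trans (gr_sym H) Hc.
- exact: gr_trans H Hc.
Qed.

End Aux.

Theorem proposition3p4 (G : groupType) (X : Type) (A : partial_action G X) :
  is_coequalizer (@coeq_map1 G X A) (@coeq_map2 G X A) (@glob_proj G X A).
Proof.
have key : forall q : G * GbX A, glob_rel A (coeq_map2 q) (coeq_map1 q).
  case=> g [[h x] D]; rewrite /glob_rel /coeq_map1 /coeq_map2 /alpha_GbX /iota_GbX /=.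
  rewrite invgM mulgA mulVg mul1g invgM invgK -mulgA mulVg mulg1; by split.
split.
  move=> q; apply: eq_sig_hprop.
    move=> P p1 p2; apply: proof_irrelevance.
  by rewrite /=; symmetry; apply: gr_eq; apply: key.
move=> Z h Hh.
have wd : forall a b, glob_rel A a b -> h a = h b.
  case=> [a1 a2] [b1 b2] [D E].
  pose p : GbX A := exist _ (b1^-1 * a1, a2) D.
  have := Hh (b1, p).
  rewrite /coeq_map1 /coeq_map2 /alpha_GbX /iota_GbX /= E mulgA mulgV mul1g => ->.
  by [].
pose u (y : glob_quot A) : Z := h (proj1_sig (constructive_indefinite_description _ (proj2_sig y))).
have uq : forall b, u (glob_proj A b) = h b.
  move=> b; rewrite /u; case: constructive_indefinite_description => a /= Ha.
  apply: wd.
  by apply: gr_sym; rewrite Ha; apply: gr_refl.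
exists u; split => // u' Hu' [P [a Ha]].
have -> : exist _ P (ex_intro _ a Ha) = glob_proj A a.
  apply: eq_sig_hprop => [Q p1 p2|]; first exact: proof_irrelevance.
  by [].
by rewrite Hu' uq.
Qed.
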